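(* Let $\lambda>0$ and let $A\in\mathbb{R}^{3\times3}$ with $\det A>0$, whose singular values satisfy $\lambda_1\le\lambda_2\le\lambda_3$. Let $\alpha=\lambda_2\lambda_3-\lambda\lambda_1$, $\beta=\lambda_1\lambda_3-\lambda\lambda_2$, $\gamma=\lambda_1\lambda_2-\lambda\lambda_3$. Then there is $R\in SO(3)$ such that $$G(A)=(1-R_{11})\alpha+(1-R_{22})\beta+(1-R_{33})\gamma.$$
   Context: Singular values of $A$ are the square roots of the eigenvalues of $A^TA$. $P(A)=\sum_{1\le i<j\le3}\lambda_i(A)\lambda_j(A)-\lambda\sum_i\lambda_i(A)$, $N(A)=\operatorname{tr}\operatorname{cof}A-\lambda\operatorname{tr}A$ (cof the cofactor matrix), and $G(A)=P(A)-N(A)$. *)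

(* Defs.v *)
From HB Require Import structures.
From mathcomp Require Import all_boot all_order all_algebra.
From mathcomp Require Import reals.
Set Implicit Arguments. Unset Strict Implicit. Unset Printing Implicit Defensive.
Import Order.TTheory GRing.Theory Num.Theory.
Local Open Scope ring_scope.

Definition i0 : 'I_3 := @Ordinal 3 0 isT.
Definition i1 : 'I_3 := @Ordinal 3 1 isT.
Definition i2 : 'I_3 := @Ordinal 3 2 isT.

(* l1 <= l2 <= l3 are the singular values of A (with multiplicity):
   they are nonnegative and their squares are the eigenvalues of A^T A,
   counted with multiplicity, i.e. the roots of its characteristic polynomial. *)
Definition sorted_singular_values (R : realType) (A : 'M[R]_3) (l1 l2 l3 : R) : Prop :=
  [/\ 0 <= l1, l1 <= l2, l2 <= l3 &
      char_poly (A^T *m A) = ('X - (l1 ^+ 2)%:P) * ('X - (l2 ^+ 2)%:P) * ('X - (l3 ^+ 2)%:P)].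

Definition cofmx (R : realType) (A : 'M[R]_3) : 'M[R]_3 :=
  \matrix_(i, j) cofactor A i j.

(* P(A), expressed through the singular values l1 l2 l3 of A *)
Definition Pfun (R : realType) (lam l1 l2 l3 : R) : R :=
  l1 * l2 + l1 * l3 + l2 * l3 - lam * (l1 + l2 + l3).

Definition Nfun (R : realType) (lam : R) (A : 'M[R]_3) : R :=
  \tr (cofmx A) - lam * \tr A.

Definition SO3 (R : realType) (Q : 'M[R]_3) : Prop :=
  Q^T *m Q = 1%:M /\ \det Q = 1.

(* Main.v *)
Require Import Defs.
From HB Require Import structures.
From mathcomp Require Import all_boot all_order all_algebra.
From mathcomp Require Import reals ring lra.
Import Order.TTheory GRing.Theory Num.Theory.
Set Implicit Arguments. Unset Strict Implicit. Unset Printing Implicit Defensive.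
Local Open Scope ring_scope.

Lemma ord3P (i : 'I_3) : i = i0 \/ i = i1 \/ i = i2.
Proof.
case: i => [[|[|[|//]]] Hi].
- by left; apply: val_inj.
- by right; left; apply: val_inj.
- by right; right; apply: val_inj.
Qed.

Lemma sum3 (R : nmodType) (F : 'I_3 -> R) : \sum_(i < 3) F i = F i0 + F i1 + F i2.
Proof.
rewrite !big_ord_recl big_ord0 addr0 addrA.
by congr (F _ + F _ + F _); apply: val_inj.
Qed.

Lemma prod3 (R : comPzSemiRingType) (F : 'I_3 -> R) : \prod_(i < 3) F i = F i0 * F i1 * F i2.
Proof.
rewrite !big_ord_recl big_ord0 mulr1 mulrA.
by congr (F _ * F _ * F _); apply: val_inj.
Qed.

Definition mxn (R : Type) (M : 'M[R]_3) (a b : nat) := M (inord a) (inord b).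
Lemma mxnE (R : Type) (M : 'M[R]_3) (x y : 'I_3) : M x y = mxn M x y.
Proof. by rewrite /mxn !inord_val. Qed.
Opaque mxn.

Lemma det3 (R : comPzRingType) (M : 'M[R]_3) : \det M =
  M i0 i0 * (M i1 i1 * M i2 i2 - M i1 i2 * M i2 i1)
- M i0 i1 * (M i1 i0 * M i2 i2 - M i1 i2 * M i2 i0)
+ M i0 i2 * (M i1 i0 * M i2 i1 - M i1 i1 * M i2 i0).
Proof.
rewrite (expand_det_row _ i0) sum3 /cofactor.
rewrite !(expand_det_row _ ord0) !big_ord_recl !big_ord0 /cofactor.
rewrite !det_mx11 /= !mxE /=.
rewrite !(mxnE M) /bump /=.
ring.
Qed.

Lemma cubicE (R : comNzRingType) (a b c : R) :
  ('X - a%:P) * ('X - b%:P) * ('X - c%:P) =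
  'X^3 - (a + b + c)%:P * 'X^2 + (a*b + a*c + b*c)%:P * 'X - (a*b*c)%:P.
Proof. rewrite !polyCD !polyCM; ring. Qed.

Lemma cp_facts (R : fieldType) (S : 'M[R]_3) m1 m2 m3 :
  char_poly S = ('X - m1%:P) * ('X - m2%:P) * ('X - m3%:P) ->
  \tr S = m1 + m2 + m3 /\ \det S = m1 * m2 * m3.
Proof.
move=> H; split.
  have := char_poly_trace S isT; rewrite H cubicE /= !coefE /= => E.
  by rewrite -[\tr S]opprK -E; ring.
have := char_poly_det S; rewrite H cubicE !coefE /= => E.
transitivity (- ((-1)^+3 * \det S)); first ring.
by rewrite -E; ring.
Qed.

Lemma eigvec (F : fieldType) (S : 'M[F]_3) m1 m2 m3 m :
  char_poly S = ('X - m1%:P) * ('X - m2%:P) * ('X - m3%:P) ->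
  (m == m1) || (m == m2) || (m == m3) ->
  exists2 v : 'rV_3, v != 0 & v *m S = m *: v.
Proof.
move=> H Hm.
have : eigenvalue S m by rewrite eigenvalue_root_char H !rootM !root_XsubC.
by case/eigenvalueP => v Hv Hn; exists v.
Qed.

Lemma unit_eig (R : realType) (S : 'M[R]_3) m (v : 'rV[R]_3) :
  v != 0 -> v *m S = m *: v ->
  exists u : 'rV_3, u *m S = m *: u /\ u 0 i0 ^+ 2 + u 0 i1 ^+ 2 + u 0 i2 ^+ 2 = 1.
Proof.
move=> Hv HS.
set d := v 0 i0 ^+ 2 + v 0 i1 ^+ 2 + v 0 i2 ^+ 2.
have h0 := sqr_ge0 (v 0 i0); have h1 := sqr_ge0 (v 0 i1); have h2 := sqr_ge0 (v 0 i2).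
have dne : d != 0.
  apply/negP => /eqP Hd; move/eqP: Hv; apply; apply/rowP => j; rewrite mxE.
  have e0 : v 0 i0 ^+ 2 = 0 by rewrite /d in Hd; lra.
  have e1 : v 0 i1 ^+ 2 = 0 by rewrite /d in Hd; lra.
  have e2 : v 0 i2 ^+ 2 = 0 by rewrite /d in Hd; lra.
  move/eqP: e0; rewrite sqrf_eq0 => /eqP e0.
  move/eqP: e1; rewrite sqrf_eq0 => /eqP e1.
  move/eqP: e2; rewrite sqrf_eq0 => /eqP e2.
  by case: (ord3P j) => [->|[->|->]].
have dgt : 0 < d by rewrite lt0r dne /d; lra.
set s := Num.sqrt d.
have sgt : 0 < s by rewrite sqrtr_gt0.
have s2 : s ^+ 2 = d by rewrite sqr_sqrtr // ltW.
exists (s^-1 *: v); split.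
  by rewrite -scalemxAl HS !scalerA mulrC.
rewrite !mxE.
have sne : s != 0 by rewrite gt_eqF.
rewrite !exprMn -!mulrDr -/d -s2; by field.
Qed.

Lemma orth (R : fieldType) (S : 'M[R]_3) (a c : 'rV_3) m1 m3 :
  S^T = S -> a *m S = m1 *: a -> c *m S = m3 *: c -> m1 != m3 ->
  a 0 i0 * c 0 i0 + a 0 i1 * c 0 i1 + a 0 i2 * c 0 i2 = 0.
Proof.
move=> Hs Ha Hc Hne.
have E : m1 *: (a *m c^T) = m3 *: (a *m c^T).
  rewrite scalemxAl -Ha -mulmxA.
  have -> : S *m c^T = (c *m S)^T by rewrite trmx_mul Hs.
  by rewrite Hc linearZ /= scalemxAr.
have := congr1 (fun M : 'M_1 => M 0 0) E; rewrite /= !mxE sum3 !mxE => E2.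
have : (m1 - m3) * (a 0 i0 * c 0 i0 + a 0 i1 * c 0 i1 + a 0 i2 * c 0 i2) = 0.
  by rewrite mulrBl E2 subrr.
by move/eqP; rewrite mulf_eq0 subr_eq0 (negbTE Hne) => /eqP.
Qed.

Lemma e01 : (i0 == i1) = false. Proof. by []. Qed.
Lemma e02 : (i0 == i2) = false. Proof. by []. Qed.
Lemma e10 : (i1 == i0) = false. Proof. by []. Qed.
Lemma e12 : (i1 == i2) = false. Proof. by []. Qed.
Lemma e20 : (i2 == i0) = false. Proof. by []. Qed.
Lemma e21 : (i2 == i1) = false. Proof. by []. Qed.
Definition ieqE := (eqxx, e01, e02, e10, e12, e20, e21).

Definition r3 (R : Type) (a b c : R) : 'rV[R]_3 :=
  \row_j (if j == i0 then a else if j == i1 then b else c).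

Definition mk3 (R : Type) (a b c : 'rV[R]_3) : 'M[R]_3 :=
  \matrix_(i, j) (if i == i0 then a 0 j else if i == i1 then b 0 j else c 0 j).

Lemma mk3E (R : Type) (a b c : 'rV[R]_3) i j :
  mk3 a b c i j = if i == i0 then a 0 j else if i == i1 then b 0 j else c 0 j.
Proof. by rewrite mxE. Qed.

Definition cross (R : pzRingType) (c a : 'rV[R]_3) : 'rV[R]_3 :=
  r3 (c 0 i1 * a 0 i2 - c 0 i2 * a 0 i1)
     (c 0 i2 * a 0 i0 - c 0 i0 * a 0 i2)
     (c 0 i0 * a 0 i1 - c 0 i1 * a 0 i0).

Lemma mk3_mul (R : pzSemiRingType) (a b c : 'rV[R]_3) (S : 'M[R]_3) :
  mk3 a b c *m S = mk3 (a *m S) (b *m S) (c *m S).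
Proof.
apply/matrixP => i j; rewrite !mxE.
by case: (ord3P i) => [->|[->|->]]; rewrite ?ieqE; apply: eq_bigr => k _; rewrite ?mxE ?ieqE.
Qed.

Lemma VV_lem (R : realFieldType) (a c : 'rV[R]_3) :
  a 0 i0 ^+ 2 + a 0 i1 ^+ 2 + a 0 i2 ^+ 2 = 1 ->
  c 0 i0 ^+ 2 + c 0 i1 ^+ 2 + c 0 i2 ^+ 2 = 1 ->
  a 0 i0 * c 0 i0 + a 0 i1 * c 0 i1 + a 0 i2 * c 0 i2 = 0 ->
  let V := mk3 a (cross c a) c in V *m V^T = 1%:M /\ \det V = 1.
Proof.
move=> na nc ac V; split.
  apply/matrixP => i j; rewrite !mxE sum3 !mxE.
  move: na nc ac; rewrite /cross /r3 ?mxE.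
  set a0 := a 0 i0; set a1 := a 0 i1; set a2 := a 0 i2.
  set c0 := c 0 i0; set c1 := c 0 i1; set c2 := c 0 i2.
  move=> na nc ac.
  case: (ord3P i) => [->|[->|->]]; case: (ord3P j) => [->|[->|->]]; rewrite !ieqE /= ?mulr1n ?mulr0n.
  all: try nra.
rewrite det3 /V !mk3E !ieqE /cross /r3 !mxE !ieqE.
move: na nc ac.
set a0 := a 0 i0; set a1 := a 0 i1; set a2 := a 0 i2.
set c0 := c 0 i0; set c1 := c 0 i1; set c2 := c 0 i2.
move=> na nc ac.
nra.
Qed.

Lemma trE (R : Type) (A : 'M[R]_3) i j : A^T i j = A j i.
Proof. by rewrite mxE. Qed.

Lemma spec_ne (R : realType) (S : 'M[R]_3) m1 m2 m3 : S^T = S ->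
  char_poly S = ('X - m1%:P) * ('X - m2%:P) * ('X - m3%:P) -> m1 != m3 ->
  exists V : 'M_3, V *m V^T = 1%:M /\ \det V = 1 /\ V *m S *m V^T = diag_mx (r3 m1 m2 m3).
Proof.
move=> Hs H Hne.
have [v1 nz1 E1] := @eigvec _ S m1 m2 m3 m1 H ltac:(by rewrite eqxx).
have [a [Ha na]] := unit_eig nz1 E1.
have [v3 nz3 E3] := @eigvec _ S m1 m2 m3 m3 H ltac:(by rewrite eqxx !orbT).
have [c [Hc nc]] := unit_eig nz3 E3.
have ac := orth Hs Ha Hc Hne.
have [VV dV] := VV_lem na nc ac.
set b := cross c a in VV dV *; set V := mk3 a b c in VV dV *.
exists V; split=> //; split=> //.
have VtV : V^T *m V = 1%:M by apply: mulmx1C.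
have VS : V *m S = mk3 (m1 *: a) (b *m S) (m3 *: c) by rewrite /V mk3_mul Ha Hc.
set M := V *m S *m V^T.
have Msym : M^T = M by rewrite /M !trmx_mul trmxK Hs mulmxA.
have R0 : forall j, M i0 j = m1 * (i0 == j)%:R.
  move=> j; transitivity (m1 * (1%:M : 'M[R]_3) i0 j); last by rewrite mxE. rewrite -VV /M VS !mxE mulr_sumr; apply: eq_bigr => k _.
  by rewrite !mxE !ieqE /= mulrA.
have R2 : forall j, M i2 j = m3 * (i2 == j)%:R.
  move=> j; transitivity (m3 * (1%:M : 'M[R]_3) i2 j); last by rewrite mxE. rewrite -VV /M VS !mxE mulr_sumr; apply: eq_bigr => k _.
  by rewrite !mxE !ieqE /= mulrA.
have trM : \tr M = \tr S by rewrite /M mxtrace_mulC mulmxA VtV mul1mx.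
have [trS _] := cp_facts H.
move: trM; rewrite trS /mxtrace sum3 R0 R2 !ieqE /= !mulr1 => trM.
apply/matrixP => i j.
have DE : diag_mx (r3 m1 m2 m3) i j = (r3 m1 m2 m3) 0 i *+ (i == j) by rewrite mxE.
rewrite DE /r3 mxE.
case: (ord3P i) => [->|[->|->]]; rewrite ?R0 ?R2;
  case: (ord3P j) => [->|[->|->]]; rewrite ?ieqE /= ?mulr1n ?mulr0n ?mulr1 ?mulr0 //.
- by rewrite -Msym trE R0 !ieqE /= mulr0.
- have -> : M i1 i1 = m1 + m2 + m3 - m1 - m3 by rewrite -trM; ring.
  ring.
- by rewrite -Msym trE R2 !ieqE /= mulr0.
Qed.

Lemma XXt0 (R : realFieldType) (X : 'M[R]_3) : X *m X^T = 0 -> X = 0.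
Proof.
move=> H; apply/matrixP => i j.
have : (X *m X^T) i i = 0 by rewrite H mxE.
rewrite !mxE sum3 !mxE => E.
have h : forall x y z : R, x * x + y * y + z * z = 0 -> x = 0 /\ y = 0 /\ z = 0.
  move=> x y z Hs.
  have hx : x * x = 0 by nra.
  have hy : y * y = 0 by nra.
  have hz : z * z = 0 by nra.
  by move: hx hy hz => /eqP; rewrite mulf_eq0 orbb => /eqP -> /eqP;
     rewrite mulf_eq0 orbb => /eqP -> /eqP; rewrite mulf_eq0 orbb => /eqP ->.
have [e0 [e1 e2]] := h _ _ _ E.
by case: (ord3P j) => [->|[->|->]].
Qed.

Lemma spec_eq (R : realType) (S : 'M[R]_3) m : S^T = S ->
  char_poly S = ('X - m%:P) * ('X - m%:P) * ('X - m%:P) -> S = m%:M.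
Proof.
move=> Hs H.
have CH := Cayley_Hamilton S.
rewrite H !rmorphM /= !rmorphB /= horner_mx_X horner_mx_C in CH.
set T := S - m%:M in CH.
have Tt : T^T = T by rewrite /T linearB /= Hs tr_scalar_mx.
rewrite -!mulmxE in CH.
have T2 : T *m T = 0.
  by apply: XXt0; rewrite !trmx_mul Tt !mulmxA CH mul0mx.
have T0 : T = 0 by apply: XXt0; rewrite Tt.
by apply/eqP; rewrite -subr_eq0 -/T T0.
Qed.

Lemma spec3 (R : realType) (S : 'M[R]_3) m1 m2 m3 : S^T = S -> m1 <= m2 -> m2 <= m3 ->
  char_poly S = ('X - m1%:P) * ('X - m2%:P) * ('X - m3%:P) ->
  exists V : 'M_3, V *m V^T = 1%:M /\ \det V = 1 /\ V *m S *m V^T = diag_mx (r3 m1 m2 m3).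
Proof.
move=> Hs h12 h23 H.
case: (eqVneq m1 m3) => [e|ne]; last exact: spec_ne.
have e2 : m2 = m1 by apply/eqP; rewrite eq_le h12 andbT e.
subst m2 m3.
have -> := spec_eq Hs H.
exists 1%:M; rewrite trmx1 mulmx1 det1 mul1mx mulmx1; do 2!split=> //.
rewrite -diag_const_mx; congr diag_mx; apply/rowP => j; rewrite !mxE.
by case: (ord3P j) => [->|[->|->]]; rewrite ?ieqE.
Qed.

Lemma diag_one (R : realFieldType) (a b c : R) :
  a = 1 -> b = 1 -> c = 1 -> diag_mx (r3 a b c) = 1%:M.
Proof.
move=> -> -> ->; rewrite -diag_const_mx; congr diag_mx; apply/rowP => j; rewrite !mxE.
by case: (ord3P j) => [->|[->|->]]; rewrite ?ieqE.
Qed.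

Lemma diag_mul (R : realFieldType) (a b c a' b' c' : R) :
  diag_mx (r3 a b c) *m diag_mx (r3 a' b' c') = diag_mx (r3 (a * a') (b * b') (c * c')).
Proof.
rewrite mulmx_diag; congr diag_mx; apply/rowP => j; rewrite !mxE.
by case: (ord3P j) => [->|[->|->]]; rewrite ?ieqE.
Qed.

Unset Implicit Arguments.

Theorem lemma4p1 (R : realType) (lam : R) (A : 'M[R]_3) (l1 l2 l3 : R) :
  0 < lam -> 0 < \det A ->
  sorted_singular_values A l1 l2 l3 ->
  let alpha := l2 * l3 - lam * l1 in
  let beta := l1 * l3 - lam * l2 in
  let gamma := l1 * l2 - lam * l3 in
  exists Q : 'M[R]_3, SO3 Q /\
    Pfun lam l1 l2 l3 - Nfun lam A =
      (1 - Q i0 i0) * alpha + (1 - Q i1 i1) * beta + (1 - Q i2 i2) * gamma.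
Proof.
move=> lam_gt detA_gt [l1ge l12 l23 Hc] alpha beta gamma.
set S := A^T *m A in Hc.
have Hs : S^T = S by rewrite /S trmx_mul trmxK.
have [trS detS] := cp_facts Hc.
have detS' : \det S = \det A ^+ 2 by rewrite /S det_mulmx det_tr expr2.
have l2ge : 0 <= l2 by apply: le_trans l12.
have l3ge : 0 <= l3 by apply: le_trans l23.
have pge : 0 <= l1 * l2 * l3 by rewrite !mulr_ge0.
have hprod : \det A = l1 * l2 * l3.
  have E : (\det A - l1 * l2 * l3) * (\det A + l1 * l2 * l3) = 0.
    transitivity (\det A ^+ 2 - (l1 ^+ 2 * l2 ^+ 2 * l3 ^+ 2)); first ring.
    by rewrite -detS' detS subrr.
  move/eqP: E; rewrite mulf_eq0 => /orP [/eqP E|/eqP E]; first by apply/eqP; rewrite -subr_eq0 E.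
  have : 0 < \det A + l1 * l2 * l3 by lra.
  by rewrite E ltxx.
have l1gt : 0 < l1.
  rewrite lt0r l1ge andbT; apply/negP => /eqP e.
  by move: detA_gt; rewrite hprod e !mul0r ltxx.
have l2gt : 0 < l2 by apply: lt_le_trans l12.
have l3gt : 0 < l3 by apply: lt_le_trans l23.
have l1n : l1 != 0 by rewrite gt_eqF.
have l2n : l2 != 0 by rewrite gt_eqF.
have l3n : l3 != 0 by rewrite gt_eqF.
have m12 : l1 ^+ 2 <= l2 ^+ 2 by rewrite ler_pXn2r // nnegrE.
have m23 : l2 ^+ 2 <= l3 ^+ 2 by rewrite ler_pXn2r // nnegrE.
have [V [VV [dV VSV]]] := spec3 Hs m12 m23 Hc.
set D := diag_mx (r3 l1 l2 l3).
set Di := diag_mx (r3 l1^-1 l2^-1 l3^-1).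
have DiD : Di *m D = 1%:M by rewrite diag_mul diag_one // mulVf.
have DDi : D *m Di = 1%:M by rewrite diag_mul diag_one // mulfV.
have DiSD : Di *m diag_mx (r3 (l1 ^+ 2) (l2 ^+ 2) (l3 ^+ 2)) *m Di = 1%:M.
  by rewrite !diag_mul diag_one //; field.
set U := A *m V^T *m Di.
have VtV : V^T *m V = 1%:M by apply: mulmx1C.
have UtU : U^T *m U = 1%:M.
  rewrite /U !trmx_mul trmxK tr_diag_mx.
  have -> : Di *m (V *m A^T) *m (A *m V^T *m Di) = Di *m (V *m S *m V^T) *m Di.
    by rewrite /S !mulmxA.
  by rewrite VSV DiSD.
have UUt : U *m U^T = 1%:M by apply: mulmx1C.
exists (V *m U); split.
  split.
    rewrite trmx_mul.
    have -> : U^T *m V^T *m (V *m U) = U^T *m (V^T *m V) *m U by rewrite !mulmxA.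
    by rewrite VtV mulmx1 UtU.
  rewrite det_mulmx dV mul1r /U !det_mulmx det_tr dV det_diag prod3 !mxE !ieqE /=.
  by rewrite hprod mulr1; field; rewrite l1n l2n l3n.
have AE : U *m D *m V = A.
  have -> : U *m D *m V = A *m (V^T *m (Di *m D) *m V) by rewrite /U !mulmxA.
  by rewrite DiD mulmx1 VtV mulmx1.
set Q := V *m U.
have trA : \tr A = Q i0 i0 * l1 + Q i1 i1 * l2 + Q i2 i2 * l3.
  rewrite -AE mxtrace_mulC mulmxA -/Q mul_mx_diag /mxtrace sum3 !mxE !ieqE.
  done.
have cofE : Nfun lam A = \tr (\adj A) - lam * \tr A.
  rewrite /Nfun; congr (_ - _); rewrite /mxtrace; apply: eq_bigr => i _; rewrite !mxE.
  done.
set B := V^T *m Di *m U^T.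
have AB : A *m B = 1%:M.
  rewrite -AE.
  have -> : U *m D *m V *m B = U *m (D *m (V *m V^T) *m Di) *m U^T by rewrite /B !mulmxA.
  by rewrite VV mulmx1 DDi mulmx1 UUt.
have adjE : \adj A = \det A *: B.
  by rewrite -[\adj A]mulmx1 -AB mulmxA mul_adj_mx mul_scalar_mx.
have trB : \tr B = l1^-1 * Q i0 i0 + l2^-1 * Q i1 i1 + l3^-1 * Q i2 i2.
  rewrite /B -mulmxA mxtrace_mulC -mulmxA -trmx_mul -/Q mul_diag_mx /mxtrace sum3 !mxE !ieqE.
  done.
rewrite /Pfun cofE adjE mxtraceZ trB trA hprod /alpha /beta /gamma.
by field; rewrite ?l1n ?l2n ?l3n.
Qed.
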